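(* Let $\mathcal{X},\mathcal{Y},\mathcal{U},\mathcal{Z}$ be finite sets, $(X,Y)$ with joint distribution $P_{X,Y}$ on $\mathcal{X}\times\mathcal{Y}$ ($P_X,P_Y$ full support), $f:\mathcal{X}\times\mathcal{Y}\to\mathcal{U}$, $g:\mathcal{Y}\to\mathcal{Z}$, and let $Z^n=(g(Y_t))_{t\le n}$ where $(X^n,Y^n)$ are $n$ i.i.d. copies of $(X,Y)$. Then, as $n\to\infty$, $$H_\chi(G_{[n]})=\inf_{c\in\mathcal{S}_n}H\big(c(X^n,Z^n)\big)+O(\log n).$$
   Context: A probabilistic graph is $(\mathcal{V},\mathcal{E},P_V)$ with a distribution on vertices; a coloring is a map $c$ from $\mathcal{V}$ to a finite set such that adjacent vertices receive different colors; $H_\chi(G)=\inf\{H(c(V)): c\text{ coloring of }G\}$ with $V\sim P_V$. The characteristic graph $G_{[n]}$ has vertex set $\mathcal{X}^n\times\mathcal{Z}^n$ with distribution of $(X^n,Z^n)$, and $(x^n,z^n)$, $(x'^n,z'^n)$ are adjacent iff $z^n=z'^n$ and there is $y^n$ with $g(y_t)=z_t$ for all $t$ such that $P_{X,Y}(x_t,y_t)P_{X,Y}(x'_t,y_t)>0$ for all $t\le n$ and $f(x_t,y_t)\ne f(x'_t,y_t)$ for some $t$. For $z^n\in\mathcal{Z}^n$, $T_{z^n}$ is its type (empirical distribution). $\mathcal{S}_n$ is the set of colorings of $G_{[n]}$ of the form $(x^n,z^n)\mapsto(T_{z^n},\tilde c(x^n,z^n))$ for some map $\tilde c$ from $\mathcal{X}^n\times\mathcal{Z}^n$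 into a finite set. *)

(* Defs.v *)
From HB Require Import structures.
From mathcomp Require Import all_boot all_order all_algebra.
From mathcomp Require Import all_classical all_reals.
From mathcomp Require Import exp.
Set Implicit Arguments. Unset Strict Implicit. Unset Printing Implicit Defensive.
Import Order.TTheory GRing.Theory Num.Theory.
Local Open Scope ring_scope.
Local Open Scope classical_set_scope.

Section Defs.
Variable R : realType.

(* Shannon entropy (natural log; 0 ln 0 = 0) of c(V) where V ~ p on a finite
   vertex type V and c takes values in an arbitrary eqType C. *)
Definition pushprob (V : finType) (C : eqType) (p : V -> R) (c : V -> C) (k : C) : R :=
  \sum_(v | c v == k) p v.

Definition entropy (V : finType) (C : eqType) (p : V -> R) (c : V -> C) : R :=
  - \sum_(k <- undup [seq c v | v <- enum V]) pushprob p c k * ln (pushprob p c k).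

Variables (X Y U Z : finType) (P : X -> Y -> R) (f : X -> Y -> U) (g : Y -> Z).

Definition vtx (n : nat) : finType := ({ffun 'I_n -> X} * {ffun 'I_n -> Z})%type.

Definition PXZ (n : nat) (v : vtx n) : R :=
  \sum_(y : {ffun 'I_n -> Y} | [forall t, g (y t) == v.2 t])
     \prod_(t < n) P (v.1 t) (y t).

Definition adj (n : nat) (v w : vtx n) : Prop :=
  v.2 = w.2 /\
  exists y : {ffun 'I_n -> Y},
    (forall t, g (y t) = v.2 t) /\
    (forall t, 0 < P (v.1 t) (y t) * P (w.1 t) (y t)) /\
    (exists t, f (v.1 t) (y t) <> f (w.1 t) (y t)).

Definition is_coloring (n : nat) (C : eqType) (c : vtx n -> C) : Prop :=
  forall v w, adj v w -> c v <> c w.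

(* H_chi(G_[n]); colors taken in nat (any finite color set injects into nat,
   and entropy is invariant under injective relabeling). *)
Definition Hchi (n : nat) : R :=
  inf [set h | exists c : vtx n -> nat, is_coloring c /\ h = entropy (@PXZ n) c].

Definition ztype (n : nat) (z : {ffun 'I_n -> Z}) : {ffun Z -> R} :=
  [ffun a => #|[set t | z t == a]|%:R / n%:R].

Definition infS (n : nat) : R :=
  inf [set h | exists ct : vtx n -> nat,
        is_coloring (fun v : vtx n => (ztype v.2, ct v)) /\
        h = entropy (@PXZ n) (fun v : vtx n => (ztype v.2, ct v))].
End Defs.

(* Main.v *)
Require Import Defs.
From HB Require Import structures.
From mathcomp Require Import all_boot all_order all_algebra.
From mathcomp Require Import all_classical all_reals.
From mathcomp Require Import exp.
From mathcomp Require Import ring lra zify.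
Import Order.TTheory GRing.Theory Num.Theory.
Local Open Scope ring_scope.
Section Gen.
Variables (R : realType) (V : finType) (p : V -> R).
Hypothesis p0 : forall v, 0 <= p v.

Lemma part (C : eqType) (s : seq C) (c : V -> C) (Q : pred V) (F : V -> R) :
  uniq s -> (forall v, c v \in s) ->
  \sum_(k <- s) \sum_(v | Q v && (c v == k)) F v = \sum_(v | Q v) F v.
Proof.
move=> us cs.
transitivity (\sum_(k <- s) \sum_v (if Q v && (c v == k) then F v else 0)).
  by apply: eq_bigr => k _; rewrite big_mkcond.
rewrite exchange_big /= [RHS]big_mkcond /=; apply: eq_bigr => v _.
rewrite (big_rem (c v)) //= eqxx andbT big1_seq ?addr0 //.
move=> k /andP[_]; rewrite (mem_rem_uniq _ us) inE => /andP[kv _].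
by rewrite eq_sym (negbTE kv) andbF.
Qed.

Lemma memc (C : eqType) (c : V -> C) v : c v \in undup [seq c w | w <- enum V].
Proof. by rewrite mem_undup map_f // mem_enum. Qed.

Lemma entropyE (C : eqType) (c : V -> C) :
  entropy p c = - \sum_v p v * ln (pushprob p c (c v)).
Proof.
rewrite /entropy; congr (- _).
rewrite -(@part _ (undup [seq c w | w <- enum V]) c predT); last first.
- exact: memc.
- exact: undup_uniq.
apply: eq_bigr => k _; rewrite /pushprob big_distrl /=.
by apply: eq_bigr => v /eqP ->.
Qed.

Lemma pp_ge (C : eqType) (c : V -> C) v : p v <= pushprob p c (c v).
Proof. by rewrite /pushprob (bigD1 v) //= lerDl sumr_ge0 // => w _. Qed.

Lemma pp_le (C : eqType) (c : V -> C) k : pushprob p c k <= \sum_v p v.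
Proof.
rewrite /pushprob big_mkcond /=; apply: ler_sum => v _.
by case: ifP.
Qed.

Lemma entropy_ge0 (C : eqType) (c : V -> C) : \sum_v p v = 1 -> 0 <= entropy p c.
Proof.
move=> s1; rewrite entropyE oppr_ge0; apply: sumr_le0 => v _.
by apply: mulr_ge0_le0 => //; apply: ln_le0; rewrite -s1 pp_le.
Qed.

Lemma entropy_inj (C D : eqType) (c : V -> C) (h : C -> D) :
  {in [seq c v | v <- enum V] &, injective h} ->
  entropy p (fun v => h (c v)) = entropy p c.
Proof.
move=> hi; rewrite !entropyE; congr (- _); apply: eq_bigr => v _.
congr (_ * ln _); apply: eq_bigl => w.
by rewrite (inj_in_eq hi) // map_f // mem_enum.
Qed.

Lemma sum_const_seq (A : eqType) (s : seq A) (M : R) : \sum_(i <- s) M = M * (size s)%:R.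
Proof.
elim: s => [|x s IH]; first by rewrite big_nil mulr0.
by rewrite big_cons IH /= -addn1 natrD; ring.
Qed.

Lemma ln_le_sub1 (y : R) : 0 < y -> ln y <= y - 1.
Proof.
move=> y0; have := @le_ln1Dx R (y - 1).
have -> : 1 + (y - 1) = y by ring.
apply; lra.
Qed.

Lemma entropy_pair (A B : eqType) (a : V -> A) (b : V -> B) (sA : seq A) :
  uniq sA -> (forall v, a v \in sA) -> (0 < size sA)%N ->
  entropy p (fun v => (a v, b v)) <= entropy p b + (\sum_v p v) * ln (size sA)%:R.
Proof.
move=> uA aA mgt0; rewrite !entropyE.
set M := \sum_v p v.
set m : R := (size sA)%:R.
have m0 : 0 < m by rewrite ltr0n.
set pab := fun v => pushprob p (fun v => (a v, b v)) (a v, b v).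
set pb := fun v => pushprob p b (b v).
have key : forall v, p v * (ln (pb v) - ln (pab v)) <=
    p v * ln m + (p v * pb v / pab v) / m - p v.
  move=> v; have [pv0|pvpos] := eqVneq (p v) 0.
    by rewrite pv0 !mul0r addr0 subr0.
  have pvp : 0 < p v by rewrite lt_def pvpos p0.
  have pabp : 0 < pab v by apply: (lt_le_trans pvp); apply: pp_ge.
  have pbp : 0 < pb v by apply: (lt_le_trans pvp); apply: pp_ge.
  have yp : 0 < pb v / (m * pab v) by rewrite divr_gt0 // mulr_gt0.
  have -> : ln (pb v) - ln (pab v) = ln m + ln (pb v / (m * pab v)).
    rewrite ln_div ?posrE ?mulr_gt0 // lnM ?posrE //; ring.
  have := @ln_le_sub1 _ yp => hy.
  have -> : p v * pb v / pab v / m = p v * (pb v / (m * pab v)).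
    field; apply/andP; split; [exact: lt0r_neq0 pabp | exact: lt0r_neq0 m0].
  rewrite mulrDr; set L := ln _ in hy *.
  have : p v * L <= p v * (pb v / (m * pab v) - 1) by rewrite ler_wpM2l.
  lra.
have S2 : \sum_v (p v * pb v / pab v) <= m * M.
  rewrite -(@part _ sA a predT) // /m mulrC -sum_const_seq.
  apply: ler_sum => i _.
  rewrite /M -(@part _ (undup [seq b w | w <- enum V]) b predT); last first.
  - exact: memc.
  - exact: undup_uniq.
  rewrite -(@part _ (undup [seq b w | w <- enum V]) b (fun v => true && (a v == i))); last first.
  - exact: memc.
  - exact: undup_uniq.
  apply: ler_sum => k _.
  rewrite (eq_bigr (fun v => p v * (pushprob p b k / pushprob p (fun v => (a v, b v)) (i, k)))); last first.
    move=> v /andP[/andP[_ /eqP av] /eqP bv].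
    by rewrite /pb /pab av bv mulrA.
  rewrite -big_distrl /=.
  have -> : \sum_(v | true && (a v == i) && (b v == k)) p v = pushprob p (fun v => (a v, b v)) (i, k).
    by apply: eq_bigl => v; rewrite xpair_eqE.
  set q := pushprob _ _ (i, k).
  have [->|qn0] := eqVneq q 0.
    by rewrite mul0r; apply: sumr_ge0 => v _.
  by rewrite mulrCA divff // mulr1 (eq_bigl (fun v => b v == k)).
change (- \sum_v p v * ln (pab v) <= - \sum_v p v * ln (pb v) + M * ln m).
have H : \sum_v p v * (ln (pb v) - ln (pab v)) <= \sum_v (p v * ln m + (p v * pb v / pab v)/m - p v).
  by apply: ler_sum => v _; exact: key.
have E1 : \sum_v p v * (ln (pb v) - ln (pab v)) = \sum_v p v * ln (pb v) - \sum_v p v * ln (pab v).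
  by rewrite -sumrB; apply: eq_bigr => v _; rewrite mulrBr.
have E2 : \sum_v (p v * ln m + (p v * pb v / pab v)/m - p v) = M * ln m + (\sum_v (p v * pb v / pab v))/m - M.
  by rewrite sumrB big_split /= -!mulr_suml.
have E3 : (\sum_v (p v * pb v / pab v))/m <= M by rewrite ler_pdivrMr // mulrC.
rewrite E1 E2 in H; lra.
Qed.
End Gen.

Section Main.
Variables (R : realType) (X Y U Z : finType) (P : X -> Y -> R)
    (f : X -> Y -> U) (g : Y -> Z).
Hypothesis hP0 : forall x y, 0 <= P x y.
Hypothesis hsum : \sum_(x : X) \sum_(y : Y) P x y = 1.

Lemma PXZ_ge0 n (v : vtx X Z n) : 0 <= PXZ P g v.
Proof. by apply: sumr_ge0 => y _; apply: prodr_ge0 => t _. Qed.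

Lemma PXZ_sum n : \sum_(v : vtx X Z n) PXZ P g v = 1.
Proof.
rewrite -(pair_bigA _ (fun x z => PXZ P g (x, z))) /=.
transitivity (\sum_(x : {ffun 'I_n -> X}) \sum_(y : {ffun 'I_n -> Y}) \prod_(t < n) P (x t) (y t)).
  apply: eq_bigr => x _; rewrite /PXZ /=.
  rewrite (exchange_big_dep predT) //=; apply: eq_bigr => y _.
  rewrite (eq_bigl (fun z => z == [ffun t => g (y t)])) ?big_pred1_eq // => z /=.
  apply/forallP/eqP => [H|-> t]; last by rewrite ffunE.
  by apply/ffunP => t; rewrite ffunE (eqP (H t)).
transitivity (\sum_(x : {ffun 'I_n -> X}) \prod_(t < n) \sum_(b : Y) P (x t) b).
  by apply: eq_bigr => x _; rewrite (bigA_distr_bigA (fun t b => P (x t) b)).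
rewrite -(bigA_distr_bigA (fun t a => \sum_(b : Y) P a b)) /=.
by apply: big1 => t _.
Qed.


Lemma adj_irr n (v : vtx X Z n) : ~ adj P f g v v.
Proof. by case=> _ [y [_ [_ [t]]]]; apply. Qed.

Definition sA n : seq {ffun Z -> R} :=
  undup [seq [ffun a => (val (phi a))%:R / n%:R] | phi : {ffun Z -> 'I_n.+1} <- enum {ffun Z -> 'I_n.+1}].

Lemma tz_in n (z : {ffun 'I_n -> Z}) : ztype R z \in sA n.
Proof.
rewrite mem_undup; apply/mapP.
have bd : forall a, (#|[set t | z t == a]%classic| < n.+1)%N.
  by move=> a; rewrite ltnS -[X in (_ <= X)%N](card_ord n) max_card.
exists [ffun a => Ordinal (bd a)]; first by rewrite mem_enum.
by apply/ffunP => a; rewrite !ffunE.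
Qed.

Lemma size_sA n : (0 < size (sA n))%N /\ (size (sA n) <= n.+1 ^ #|Z|)%N.
Proof.
split.
  have h : [ffun a => (val (([ffun=> ord0] : {ffun Z -> 'I_n.+1}) a))%:R / n%:R] \in sA n.
    by rewrite mem_undup map_f ?mem_enum.
  by move: h; case: (sA n).
apply: (leq_trans (size_undup _)); by rewrite size_map -cardE card_ffun card_ord.
Qed.

Lemma bounds n : Hchi P f g n <= infS P f g n /\
   infS P f g n <= Hchi P f g n + ln (size (sA n))%:R.
Proof.
rewrite /Hchi /infS.
set S1 := (X in inf X <= _).
set S2 := (X in _ <= inf X).
set p := PXZ P g (n:=n).
have hp0 : forall v, 0 <= p v by move=> v; exact: PXZ_ge0.
have hp1 : \sum_v p v = 1 by exact: PXZ_sum.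
have lb1 : lbound S1 0 by move=> h [c [_ ->]]; exact: (@entropy_ge0 _ _ p hp0 _ c hp1).
have sub21 : (S2 `<=` S1)%classic.
  move=> h [ct [col ->]].
  set c' := fun v : vtx X Z n => (ztype R v.2, ct v).
  set s := undup [seq c' v | v <- enum (vtx X Z n)].
  have hinj : {in [seq c' v | v <- enum (vtx X Z n)] &, injective (fun k => index k s)}.
    move=> x y hx hy /= E.
    by rewrite -(nth_index x (s:=s) (x:=x)) ?mem_undup // E nth_index // mem_undup.
  exists (fun v => index (c' v) s); split.
    move=> v w vw E; apply: (col v w vw); apply: (hinj) => //; by rewrite map_f ?mem_enum.
  exact: (esym (@entropy_inj _ _ p _ _ c' (fun k => index k s) hinj)).
have hlb1 : has_lbound S1 by exists 0.
have hlb2 : has_lbound S2 by exists 0 => h /sub21; exact: lb1.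
have ne1 : (S1 !=set0)%classic.
  exists (entropy p (fun v => val (enum_rank v))); exists (fun v => val (enum_rank v)); split=> //.
  move=> v w vw E; have vw' : v = w by apply: enum_rank_inj; apply: val_inj.
  by subst w; exact: (@adj_irr _ v vw).
have [mgt0 _] := size_sA n.
have B : forall h, S1 h -> exists2 h2, S2 h2 & h2 <= h + ln (size (sA n))%:R.
  move=> h [c [col ->]]; exists (entropy p (fun v => (ztype R v.2, c v))).
    exists c; split=> //; move=> v w vw [] _; exact: col v w vw.
  have := @entropy_pair _ _ p hp0 _ _ (fun v : vtx X Z n => ztype R v.2) c (sA n) (undup_uniq _) (fun v => tz_in n v.2) mgt0.
  by rewrite hp1 mul1r.
have ne2 : (S2 !=set0)%classic.
  by case: ne1 => h /B [h2 ? _]; exists h2.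
split.
  apply: lb_le_inf => // h h2; exact: ge_inf hlb1 _ (sub21 _ h2).
rewrite -lerBlDr; apply: lb_le_inf => // h h1.
have [h2 s2 le] := B h h1.
rewrite lerBlDr; exact: le_trans (ge_inf hlb2 s2) le.
Qed.
End Main.

Theorem lemma1 (R : realType) (X Y U Z : finType) (P : X -> Y -> R)
    (f : X -> Y -> U) (g : Y -> Z) :
  (forall x y, 0 <= P x y) ->
  \sum_(x : X) \sum_(y : Y) P x y = 1 ->
  (forall x, 0 < \sum_(y : Y) P x y) ->
  (forall y, 0 < \sum_(x : X) P x y) ->
  exists C : R, exists N : nat, forall n : nat, (N <= n)%N ->
    `| Hchi P f g n - infS P f g n | <= C * ln (n%:R : R).
Proof.
move=> hP0 hsum _ _.
exists (2 * #|Z|%:R), 2%N => n n2.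
have [le1 le2] := @bounds R X Y U Z P f g hP0 hsum n.
have [m0 mle] := @size_sA R Z n.
have L1 : ln ((size (sA R Z n))%:R : R) <= ln (n.+1%:R : R) * #|Z|%:R.
  rewrite mulr_natr -lnXn ?ltr0n // ler_ln ?posrE ?ltr0n ?exprn_gt0 // -natrX ler_nat //.
have L2 : ln (n.+1%:R : R) <= 2 * ln (n%:R : R).
  have n0 : (0 < n%:R :> R) by rewrite ltr0n; lia.
  rewrite -[2]/(2%:R) mulr_natl -lnXn //.
  rewrite ler_ln ?posrE ?ltr0n ?exprn_gt0 //.
  rewrite -natrX ler_nat; nia.
have Zp : 0 <= #|Z|%:R :> R by [].
rewrite distrC ger0_norm ?subr_ge0 //.
have : ln (n.+1%:R : R) * #|Z|%:R <= 2 * ln (n%:R : R) * #|Z|%:R by rewrite ler_wpM2r.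
move=> H3; rewrite mulrAC; apply: le_trans H3; apply: le_trans L1.
by have := le2; lra.
Qed.
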